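(* Every zero-error randomized streaming algorithm for \textsc{Find-Duplicate} that is $\frac{n}{s}$-concentrated must use $\Omega\left(\frac{s}{\log n}\right)$ space.
   Context: \textsc{Find-Duplicate}: the input is a stream of $3n/2$ integers, each in $\{1,\dots,n\}$; the goal is to output an integer that appears at least twice in the stream. A randomized algorithm is zero-error if with probability one it either outputs a valid output (an integer that indeed appears at least twice) or outputs the failure symbol $\bot$; it never outputs an invalid answer. An algorithm $A$ is $k$-concentrated if for every valid input $x$ there is some output $F(x)$ such that $\Pr_r[A(x,r)=F(x)]\ge \frac1k$, where $r$ is the algorithm's randomness. Space is measured in bits of memory of the one-pass streaming algorithm. *)

(* Defs.v *)
From HB Require Import structures.
From mathcomp Require Import all_boot all_order all_algebra.
From mathcomp Require Import reals exp.
Set Implicit Arguments. Unset Strict Implicit. Unset Printing Implicit Defensive.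
Import Order.TTheory GRing.Theory Num.Theory.
Local Open Scope ring_scope.

(* A one-pass streaming algorithm on streams of length m over the alphabet
   'I_n (representing {1,...,n}), with exactly S bits of memory
   (states = S-bit strings).  Randomness: at initialization, at every step,
   and at output time the algorithm receives a FRESH independent uniform
   sample from the finite set Rnd; random values must be stored in memory
   if they are to be reused.
   Output None stands for the failure symbol ⊥. *)
Record StreamAlg (n m S : nat) (Rnd : finType) := {
  sa_init : Rnd -> S.-tuple bool;
  sa_step : 'I_m -> S.-tuple bool -> 'I_n -> Rnd -> S.-tuple bool;
  sa_out  : S.-tuple bool -> Rnd -> option 'I_n }.

(* full random string: (initial coin, per-step coins, output coin) *)
Definition RandStr (m : nat) (Rnd : finType) : finType :=
  (Rnd * {ffun 'I_m -> Rnd} * Rnd)%type.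

Section Run.
Variables (n m S : nat) (Rnd : finType) (A : StreamAlg n m S Rnd).

Fixpoint sa_state (x : m.-tuple 'I_n) (r : RandStr m Rnd) (j : nat)
  : S.-tuple bool :=
  match j with
  | 0 => sa_init A r.1.1
  | j'.+1 =>
      match insub j' : option 'I_m with
      | Some t => sa_step A t (sa_state x r j') (tnth x t) (r.1.2 t)
      | None => sa_state x r j'
      end
  end.

Definition sa_run (x : m.-tuple 'I_n) (r : RandStr m Rnd) : option 'I_n :=
  sa_out A (sa_state x r m) r.2.

Definition sa_prob {R : realType} (x : m.-tuple 'I_n) (y : option 'I_n) : R :=
  #|[set r : RandStr m Rnd | sa_run x r == y]|%:R / #|RandStr m Rnd|%:R.

Definition is_dup (x : m.-tuple 'I_n) (a : 'I_n) : bool := (1 < count_mem a x)%N.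

(* zero-error: with probability one (i.e. for every random string, as the
   distribution is uniform on a finite set) the output is ⊥ or a duplicate *)
Definition zero_error : Prop :=
  forall x r, match sa_run x r with None => true | Some a => is_dup x a end.

Definition concentrated {R : realType} (k : R) : Prop :=
  forall x : m.-tuple 'I_n, exists a : 'I_n, k^-1 <= sa_prob (R:=R) x (Some a).

End Run.

Definition fd_len (n : nat) : nat := (3 * n)./2.

(* Main.v *)
Require Import Defs.
From HB Require Import structures.
From mathcomp Require Import all_boot all_order all_algebra.
From mathcomp Require Import reals exp.
From mathcomp Require Import zify ring lra.
Set Implicit Arguments. Unset Strict Implicit. Unset Printing Implicit Defensive.
Import Order.TTheory GRing.Theory Num.Theory.

Section Comb.
Variables (n L : nat) (St : finType) (sig : {set 'I_n} -> St).
Hypothesis h4 : 4 * L <= 3 * n.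

Definition Uset := [set U : {set 'I_n} | #|U| == L].
Definition core s0 := \bigcap_(U | (U \in Uset) && (sig U == s0)) U.
Definition cls s0 := [set U in Uset | sig U == s0].

Lemma count_sup (I : {set 'I_n}) :
  #|[set U in Uset | I \subset U]| <= 'C(n - #|I|, L - #|I|).
Proof.
set D := [set U in Uset | I \subset U].
have inj : {in D &, injective (fun U => U :\: I)}.
  move=> U V; rewrite !inE => /andP[_ hU] /andP[_ hV] e.
  apply/setP=> x; have := congr1 (fun W : {set 'I_n} => x \in W) e; rewrite !inE /=.
  case xI: (x \in I) => /=; last by [].
  by rewrite (subsetP hU) ?(subsetP hV).
rewrite -(card_in_imset inj).
have -> : n - #|I| = #|~: I| by have := cardsC I; rewrite card_ord; lia.
rewrite -cards_draws; apply: subset_leq_card; apply/subsetP=> B /imsetP[U].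
rewrite !inE => /andP[/eqP hL hU] ->; apply/andP; split; first by apply/subsetP=> x; rewrite !inE => /andP[].
by rewrite cardsDS // hL.
Qed.

Lemma ratio j : j <= L -> 'C(n - j, L - j) * 4 ^ j <= 'C(n, L) * 3 ^ j.
Proof.
elim: j => [|j IH] hj; first by rewrite !subn0 !expn0 !muln1.
have hj' : j <= L by apply: ltnW.
have := IH hj'.
have hb := mul_bin_diag (n - j) (L - j).-1.
have e1 : (n - j).-1 = n - j.+1 by lia.
have e2 : (L - j).-1.+1 = L - j by lia.
have e3 : (L - j).-1 = L - j.+1 by lia.
rewrite e1 e2 e3 in hb.
set C' := 'C(n - j.+1, L - j.+1) in hb *.
set C := 'C(n - j, L - j) in hb *.
set N := 'C(n, L).
rewrite !expnS => hI.
have hpos : 0 < n - j by lia.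
rewrite -(leq_pmul2l hpos).
have h43 : 4 * (L - j) <= 3 * (n - j) by lia.
apply: (@leq_trans (4 * (L - j) * (C * 4 ^ j))).
  by rewrite mulnA hb; lia.
apply: (@leq_trans (3 * (n - j) * (C * 4 ^ j))).
  by rewrite leq_mul2r h43 orbT.
apply: (@leq_trans (3 * (n - j) * (N * 3 ^ j))).
  by rewrite leq_mul2l hI orbT.
lia.
Qed.

Lemma class_card s0 j0 : j0 <= #|core s0| ->
  #|cls s0| * 4 ^ j0 <= 'C(n, L) * 3 ^ j0.
Proof.
move=> hj0.
have [/eqP c0 | ] := boolP (#|cls s0| == 0); first by rewrite c0.
rewrite -lt0n => /card_gt0P [U0]; rewrite [U0 \in cls s0]inE => /andP[U0in /eqP sU0].
have coreU0 : core s0 \subset U0.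
  by rewrite /core; apply: bigcap_inf; rewrite U0in sU0 eqxx.
have hjL : #|core s0| <= L.
  by move: (U0in); rewrite inE => /eqP <-; apply: subset_leq_card.
have hsub : cls s0 \subset [set U in Uset | core s0 \subset U].
  apply/subsetP=> U; rewrite [U \in cls s0]inE => /andP[Uin hs].
  rewrite inE Uin /=.
  by rewrite /core; apply: bigcap_inf; rewrite Uin hs.
have h1 := leq_trans (subset_leq_card hsub) (count_sup (core s0)).
have h2 := ratio hjL.
set j := #|core s0| in hj0 h1 h2 *.
have h3 : #|cls s0| * 4 ^ j <= 'C(n, L) * 3 ^ j.
  apply: leq_trans h2; by rewrite leq_mul2r h1 orbT.
have ej : j = j0 + (j - j0) by rewrite subnKC.
move: h3; rewrite ej !expnD.
set d := j - j0; set c := #|cls s0|; set N := 'C(n, L) => h3.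
have hd : 0 < 3 ^ d by rewrite expn_gt0.
rewrite -(leq_pmul2r hd).
apply: (@leq_trans (c * (4 ^ j0 * 4 ^ d))); last by move: h3; rewrite !mulnA.
rewrite -mulnA leq_mul2l leq_mul2l.
have [->|dp] := posnP d; first by rewrite !expn0 !orbT.
by rewrite leq_exp2r ?orbT.
Qed.

Lemma sum_core j0 :
  \sum_(U in Uset) #|core (sig U)| * 4 ^ j0 <=
  #|Uset| * j0 * 4 ^ j0 + #|St| * (n * ('C(n, L) * 3 ^ j0)).
Proof.
rewrite (partition_big sig predT) //=.
have e : forall s0, \sum_(U in Uset | sig U == s0) #|core (sig U)| * 4 ^ j0
          = #|cls s0| * (#|core s0| * 4 ^ j0).
  move=> s0; rewrite (eq_bigr (fun _ => #|core s0| * 4 ^ j0)); last first.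
    by move=> U /andP[_ /eqP->].
  by rewrite sum_nat_cond_const.
rewrite (eq_bigr _ (fun s0 _ => e s0)).
apply: (@leq_trans (\sum_(s0 : St) (#|cls s0| * j0 * 4 ^ j0 + n * ('C(n, L) * 3 ^ j0)))).
  apply: leq_sum => s0 _.
  have [hle | hlt] := leqP #|core s0| j0.
    apply: leq_trans (leq_addr _ _).
    by rewrite -mulnA leq_mul2l leq_mul2r hle !orbT.
  apply: leq_trans (leq_addl _ _).
  rewrite mulnCA; apply: leq_mul.
    by have := max_card (mem (core s0)); rewrite card_ord.
  exact: class_card (ltnW hlt).
have hU : \sum_(s0 : St) #|cls s0| = #|Uset|.
  rewrite -sum1_card (partition_big sig predT) //=.
  by apply: eq_bigr => s0 _; rewrite sum1dep_card.
rewrite big_split /= sum_nat_const.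
have -> : \sum_(s0 : St) #|cls s0| * j0 * 4 ^ j0 = (\sum_(s0 : St) #|cls s0|) * (j0 * 4 ^ j0).
  by rewrite big_distrl /=; apply: eq_bigr => s0 _; rewrite mulnA.
rewrite hU mulnA.
by [].
Qed.
End Comb.

Section Str.
Variables (n m S : nat) (Rnd : finType) (A : StreamAlg n m S Rnd).

Lemma state_prefix (x x' : m.-tuple 'I_n) r L j : j <= L ->
  (forall i : 'I_m, i < L -> tnth x i = tnth x' i) ->
  sa_state A x r j = sa_state A x' r j.
Proof.
move=> + h; elim: j => [|j IH] hj //=.
case: insubP => [t _ vt|_]; rewrite IH ?(ltnW hj) //.
by rewrite h // vt.
Qed.

Lemma state_suffix (x x' : m.-tuple 'I_n) r L j : L <= j ->
  sa_state A x r L = sa_state A x' r L ->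
  (forall i : 'I_m, L <= i -> tnth x i = tnth x' i) ->
  sa_state A x r j = sa_state A x' r j.
Proof.
move=> + hs h; elim: j => [|j IH] hj.
  by move: hj; rewrite leqn0 => /eqP e; rewrite -e.
have [e|ne] := eqVneq L j.+1; first by rewrite -e.
have hj' : L <= j by rewrite leq_eqVlt (negbTE ne) /= in hj.
rewrite /=; case: insubP => [t _ vt|_]; rewrite IH //.
by rewrite h // vt.
Qed.

Lemma run_eq (x x' : m.-tuple 'I_n) r L : L <= m ->
  sa_state A x r L = sa_state A x' r L ->
  (forall i : 'I_m, L <= i -> tnth x i = tnth x' i) ->
  sa_run A x r = sa_run A x' r.
Proof. by move=> hL hs h; rewrite /sa_run (state_suffix hL hs h). Qed.

Variable d : 'I_n.
Definition X (U : {set 'I_n}) (v : seq 'I_n) : m.-tuple 'I_n :=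
  insubd (nseq_tuple m d) (enum U ++ v).

Lemma X_val (U : {set 'I_n}) (v : seq 'I_n) : #|U| + size v = m -> val (X U v) = enum U ++ v.
Proof. by move=> h; rewrite /X insubdK // unfold_in /= size_cat -cardE h. Qed.

Lemma X_pre (U : {set 'I_n}) (v : seq 'I_n) (i : 'I_m) : #|U| + size v = m -> i < #|U| ->
  tnth (X U v) i = nth d (enum U) i.
Proof. by move=> h hi; rewrite (tnth_nth d) X_val // nth_cat -cardE hi. Qed.

Lemma X_suf (U : {set 'I_n}) (v : seq 'I_n) (i : 'I_m) : #|U| + size v = m -> #|U| <= i ->
  tnth (X U v) i = nth d v (i - #|U|).
Proof. by move=> h hi; rewrite (tnth_nth d) X_val // nth_cat -cardE ltnNge hi. Qed.

Lemma X_dup (U : {set 'I_n}) (v : seq 'I_n) a : uniq v -> #|U| + size v = m -> is_dup (X U v) a ->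
  (a \in U) && (a \in v).
Proof.
move=> uv h; rewrite /is_dup X_val // count_cat !count_uniq_mem ?enum_uniq //.
by rewrite mem_enum; case: (a \in U); case: (a \in v).
Qed.

End Str.

Lemma card_sum (T : finType) (P : pred T) : #|[set x | P x]| = (\sum_x (P x : nat))%N.
Proof. by rewrite -sum1dep_card big_mkcond /=; apply: eq_bigr => x _; case: (P x). Qed.

Lemma sum_sub (T : finType) (K : {set T}) (F : T -> nat) :
  (\sum_(a in K) F a <= \sum_a F a)%N.
Proof. by rewrite [X in (_ <= X)%N](bigID (mem K)) /=; apply: leq_addr. Qed.

Local Open Scope ring_scope.
Section Key.
Variables (R : realType) (n : nat) (s : R) (S : nat) (Rnd : finType).
Variable (A : StreamAlg n (fd_len n) S Rnd).
Hypotheses (hn : (16 <= n)%N) (hs : 0 < s) (hR : (0 < #|Rnd|)%N).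
Hypotheses (hZ : zero_error A) (hC : concentrated A (n%:R / s)).

Local Notation m := (fd_len n).
Definition cnt (x : m.-tuple 'I_n) (a : 'I_n) : nat :=
  #|[set r : RandStr m Rnd | sa_run A x r == Some a]|.

Lemma NR_gt0 : (0 < #|RandStr m Rnd|)%N.
Proof.
have [r0 _] := card_gt0P hR.
by apply/card_gt0P; exists (r0, [ffun=> r0], r0).
Qed.

Let NR := #|RandStr m Rnd|.
Let p : R := s / n%:R.

Lemma p_gt0 : 0 < p.
Proof. rewrite /p divr_gt0 // ltr0n; lia. Qed.

Lemma hC' x : exists a, p * NR%:R <= (cnt x a)%:R.
Proof.
have [a ha] := hC x; exists a.
move: ha; rewrite invf_div /sa_prob -/(cnt x a) -/p.
rewrite ler_pdivlMr // ltr0n; exact: NR_gt0.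
Qed.

Lemma hGr x a : p * NR%:R <= (cnt x a)%:R -> exists r, sa_run A x r = Some a.
Proof.
move=> h.
have : (0 < cnt x a)%N.
  rewrite -(ltr0n R); apply: lt_le_trans h; rewrite mulr_gt0 ?p_gt0 // ltr0n.
  exact: NR_gt0.
by move/card_gt0P => [r]; rewrite inE => /eqP; exists r.
Qed.


Let L := ((3 * n) %/ 4)%N.
Let T := (m - L)%N.
Let M := (n - T)%N.

Lemma hm : m = ((3 * n) %/ 2)%N.
Proof. by rewrite /fd_len divn2. Qed.

Lemma hLm : (L <= m)%N.
Proof. rewrite hm /L; lia. Qed.
Lemma h4 : (4 * L <= 3 * n)%N.
Proof. rewrite /L; lia. Qed.
Lemma hLn : (L <= n)%N.
Proof. rewrite /L; lia. Qed.
Lemma hTL : (L + T = m)%N.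
Proof. rewrite /T; have := hLm; lia. Qed.
Lemma hM8 : (n <= 8 * M)%N.
Proof. rewrite /M /T hm /L; lia. Qed.
Lemma hTn : (T <= n)%N.
Proof. rewrite /T hm /L; lia. Qed.

Let d : 'I_n := Ordinal (leq_trans (isT : (0 < 16)%N) hn).
Let sg (r : RandStr m Rnd) (U : {set 'I_n}) := sa_state A (X m d U (nseq T d)) r L.
Let cr (r : RandStr m Rnd) := core L (sg r).

Lemma same_class r (U U' : {set 'I_n}) (v : seq 'I_n) : #|U| = L -> #|U'| = L -> size v = T ->
  sg r U = sg r U' -> sa_run A (X m d U v) r = sa_run A (X m d U' v) r.
Proof.
move=> hU hU' hv hsg.
have e1 : forall W : {set 'I_n}, #|W| = L -> forall w : seq 'I_n, size w = T ->
    sa_state A (X m d W w) r L = sg r W.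
  move=> W hW w hw; rewrite /sg; apply: (state_prefix A r (leqnn _)) => i hi.
  by rewrite !(X_pre d) ?size_nseq ?hW ?hw ?hTL.
apply: (run_eq hLm); first by rewrite !e1.
by move=> i hi; rewrite !(X_suf d) ?hU ?hU' ?hv ?hTL.
Qed.

Lemma core_mem r (U : {set 'I_n}) (v : seq 'I_n) a : U \in Uset n L -> uniq v -> size v = T ->
  sa_run A (X m d U v) r = Some a -> a \in cr r (sg r U).
Proof.
move=> hU uv hv hrun; apply/bigcapP => U' /andP[hU' /eqP hs'].
move: hU hU'; rewrite !inE => /eqP hU /eqP hU'.
have := hZ (X m d U' v) r; rewrite -(same_class hU hU' hv (esym hs')) hrun.
by move/X_dup => /(_ uv); rewrite hU' hv hTL => /(_ erefl) /andP[].
Qed.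


Lemma path_ex (U : {set 'I_n}) : U \in Uset n L -> forall i, (i <= M)%N ->
  exists K : {set 'I_n}, [/\ #|K| = i, K \subset U &
    forall a, a \in K -> exists v : seq 'I_n,
      [/\ uniq v, size v = T & p * NR%:R <= (cnt (X m d U v) a)%:R]].
Proof.
move=> hU; elim=> [|i IH] hi.
  exists set0; split; [by rewrite cards0 | by rewrite sub0set | by move=> a; rewrite inE].
have [K [hK KU hKa]] := IH (ltnW hi).
set v := take T (enum (~: K)).
have uv : uniq v by rewrite take_uniq ?enum_uniq.
have sv : size v = T.
  rewrite size_takel // -cardE.
  have := cardsC K; rewrite card_ord hK.
  move: hi; rewrite /M; have := hTn; lia.
have [a ha] := hC' (X m d U v).
have [r hr] := hGr ha.
have hUc : #|U| = L by move: hU; rewrite inE => /eqP.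
have := hZ (X m d U v) r; rewrite hr.
have hsz : (#|U| + size v)%N = m by rewrite hUc sv hTL.
move=> /(X_dup uv hsz) /andP[aU av].
have aK : a \notin K.
  by move: av => /mem_take; rewrite mem_enum inE.
exists (a |: K); split.
- by rewrite cardsU1 aK hK.
- by rewrite subUset sub1set aU KU.
- move=> b; rewrite in_setU1 => /orP[/eqP-> | bK]; last exact: hKa.
  by exists v.
Qed.


Lemma perU (U : {set 'I_n}) : U \in Uset n L ->
  M%:R * (p * NR%:R) <= (\sum_r #|cr r (sg r U)|)%:R.
Proof.
move=> hU.
have [K [hK KU hKa]] := path_ex hU (leqnn M).
have h1 : forall a, a \in K -> p * NR%:R <= (#|[set r | a \in cr r (sg r U)]|)%:R.
  move=> a /hKa [v [uv sv hc]]; apply: (le_trans hc); rewrite ler_nat.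
  apply: subset_leq_card; apply/subsetP => r; rewrite !inE => /eqP hr.
  exact: core_mem hU uv sv hr.
have h2 : (\sum_(a in K) #|[set r | a \in cr r (sg r U)]| <= \sum_r #|cr r (sg r U)|)%N.
  under eq_bigr do rewrite card_sum.
  rewrite exchange_big /=; apply: leq_sum => r _.
  apply: leq_trans (sum_sub _ _) _.
  by rewrite -card_sum; apply: subset_leq_card; apply/subsetP => a; rewrite inE.
apply: le_trans (_ : (\sum_(a in K) #|[set r | a \in cr r (sg r U)]|)%:R <= _);
  last by rewrite ler_nat.
rewrite natr_sum -hK mulr_natl -sumr_const; exact: ler_sum.
Qed.


Lemma perR r l : (n <= 2 ^ l)%N ->
  (\sum_(U in Uset n L) #|cr r (sg r U)| <= #|Uset n L| * (3 * (S + l)).+1)%N.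
Proof.
move=> hl.
have := sum_core (sg r) h4 (3 * (S + l)).
rewrite card_tuple card_bool -[in 'C(n, L)](card_ord n) -card_draws -/(Uset n L).
set t := (S + l)%N; set N := #|Uset n L|; set j0 := (3 * t)%N.
move=> h.
have hk : (2 ^ S * n * 3 ^ j0 <= 4 ^ j0)%N.
  have e1 : (4 ^ j0 = 64 ^ t)%N by rewrite /j0 expnM.
  have e2 : (3 ^ j0 = 27 ^ t)%N by rewrite /j0 expnM.
  rewrite e1 e2.
  apply: (@leq_trans (2 ^ t * 27 ^ t)).
    rewrite leq_mul2r; apply/orP; right.
    by rewrite /t expnD leq_mul2l hl orbT.
  rewrite -expnMn; case: (posnP t) => [->|tp]; first by [].
  by rewrite leq_exp2r.
have h' : (\sum_(U in Uset n L) #|cr r (sg r U)| * 4 ^ j0 <= N * j0.+1 * 4 ^ j0)%N.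
  apply: (leq_trans h).
  rewrite -[j0.+1]addn1 mulnDr muln1 mulnDl leq_add2l.
  move: hk; set a := (2 ^ S)%N; set b := (3 ^ j0)%N; set c := (4 ^ j0)%N => hk.
  have : (N * (a * n * b) <= N * c)%N by rewrite leq_mul2l hk orbT.
  move=> hh; apply: leq_trans hh; rewrite !mulnA.
  by rewrite (mulnC (a * n) N) !mulnA.
rewrite -(leq_pmul2r (expn_gt0 4 j0)) big_distrl /=.
exact: h'.
Qed.


Lemma key l : (n <= 2 ^ l)%N -> s <= (8 * (3 * (S + l)).+1)%:R.
Proof.
move=> hl.
set B := (3 * (S + l)).+1%N; set N := #|Uset n L|.
have hN : (0 < N)%N.
  by rewrite /N /Uset card_draws card_ord bin_gt0 hLn.
have h1 : \sum_(U in Uset n L) (M%:R * (p * NR%:R)) <=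
          \sum_(U in Uset n L) (\sum_r #|cr r (sg r U)|)%:R.
  by apply: ler_sum => U hU; exact: perU.
rewrite sumr_const -natr_sum exchange_big /= in h1.
have h2 : (\sum_r \sum_(U in Uset n L) #|cr r (sg r U)| <= \sum_(r : RandStr m Rnd) N * B)%N.
  by apply: leq_sum => r _; exact: perR.
rewrite sum_nat_const in h2.
have h3 : (M%:R * p) * (NR%:R * N%:R) <= B%:R * (NR%:R * N%:R).
  have e : (M%:R * p) * (NR%:R * N%:R) = M%:R * (p * NR%:R) *+ #|Uset n L|.
    by rewrite -mulr_natr /N; ring.
  rewrite e; apply: (le_trans h1).
  have e2 : B%:R * (NR%:R * N%:R) = (NR * (N * B))%:R :> R.
    by rewrite !natrM; ring.
  by rewrite e2 ler_nat.
have hpos : 0 < NR%:R * N%:R :> R.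
  by rewrite mulr_gt0 // ltr0n ?hN //; exact: NR_gt0.
rewrite ler_pM2r // in h3.
have hn0 : n%:R != 0 :> R by rewrite pnatr_eq0; lia.
have es : s = p * n%:R by rewrite /p divfK.
have h8 : n%:R <= 8 * M%:R :> R.
  by rewrite -(natrM R 8) ler_nat; exact: hM8.
have hp := p_gt0.
rewrite es natrM.
have : p * n%:R <= p * (8 * M%:R) by rewrite ler_pM2l.
move: h3; set a := p * n%:R; set bb := M%:R * p; set cc := B%:R.
have -> : p * (8 * M%:R) = 8 * bb by rewrite /bb; ring.
rewrite [8%:R]/= => h3 h4; lra.
Qed.


Lemma S_pos : (0 < S)%N.
Proof.
rewrite lt0n; apply/negP => /eqP S0.
have allEq : forall t t' : S.-tuple bool, t = t'.
  move=> t t'; apply: val_inj.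
  have h1 : size (val t) == 0%N by rewrite size_tuple S0.
  have h2 : size (val t') == 0%N by rewrite size_tuple S0.
  by move: h1 h2 => /eqP/size0nil -> /eqP/size0nil ->.
have [a ha] := hC' (nseq_tuple m d).
have [r hr] := hGr ha.
have n1 : (1 < n)%N by lia.
pose b : 'I_n := if a == d then Ordinal n1 else d.
have hba : b != a.
  rewrite /b; case: (eqVneq a d) => [->|hne]; last by rewrite eq_sym.
  by apply/negP => /eqP/(congr1 val) /=.
have := hZ (nseq_tuple m b) r.
have -> : sa_run A (nseq_tuple m b) r = Some a.
  by rewrite -hr /sa_run (allEq (sa_state A (nseq_tuple m b) r m) (sa_state A (nseq_tuple m d) r m)).
rewrite /is_dup /= count_nseq /=.
by move: hba; case: (_ == _).
Qed.

End Key.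

Theorem mainTheorem3 (R : realType) :
  exists c : R, 0 < c /\
  exists n0 : nat, forall n : nat, (n0 <= n)%N ->
  forall s : R, 0 < s ->
  forall (S : nat) (Rnd : finType) (A : StreamAlg n (fd_len n) S Rnd),
    (0 < #|Rnd|)%N ->
    zero_error A ->
    concentrated A (n%:R / s) ->
    c * s / ln (n%:R : R) <= S%:R.
Proof.
have ln2 : 0 < ln (2 : R) by apply: ln_gt0; rewrite ltr1n.
exists (ln 2 / 30); split; first by rewrite divr_gt0.
exists (2 ^ 10)%N => n hn s hs S Rnd A hR hZ hC.
have hn16 : (16 <= n)%N by apply: leq_trans hn.
set t := trunc_log 2 n.
have ht1 : (2 ^ t <= n)%N by apply: trunc_logP; lia.
have ht2 : (n <= 2 ^ t.+1)%N by apply: ltnW; apply: trunc_log_ltn.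
have ht10 : (10 <= t)%N.
  have : (2 ^ 10 < 2 ^ t.+1)%N by apply: (leq_ltn_trans hn); apply: trunc_log_ltn.
  by rewrite ltn_exp2l // ltnS.
have hk := key hn16 hs hR hZ hC ht2.
have hS := S_pos hn16 hs hR hZ hC.
have hnat : (8 * (3 * (S + t.+1)).+1 <= 30 * t * S)%N by nia.
have hsr : s <= (30 * t * S)%:R by apply: (le_trans hk); rewrite ler_nat.
have hlnn : 0 < ln (n%:R : R) by apply: ln_gt0; rewrite ltr1n; lia.
have hlt : ln (2 : R) * t%:R <= ln (n%:R : R).
  rewrite mulr_natr -lnXn; last by [].

  rewrite ler_ln ?posrE ?exprn_gt0 ?ltr0n //; last by lia.
  by rewrite -natrX ler_nat.
rewrite ler_pdivrMr //.
move: hsr hlt; rewrite !natrM.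
have hS1 : 1 <= S%:R :> R by rewrite ler1n.
set a := ln (2 : R); set L := ln (n%:R : R); set T := t%:R; set SS := S%:R => h1 h2.
have hT : 0 <= T by rewrite /T ler0n.
have ha : 0 <= a / 30 by rewrite divr_ge0 // ltW.
apply: (le_trans (ler_wpM2l ha h1)).
have -> : a / 30 * (30 * T * SS) = (a * T) * SS.
  have h30 : (30 : R) != 0 by rewrite pnatr_eq0.
  by field.
rewrite mulrC ler_wpM2l //; lra.
Qed.
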